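(* Let $\gamma=[0;1,1,c_3,1,c_5,1,c_7,1,\dots]$, i.e. $\gamma$ has infinite continued fraction expansion $[c_0;c_1,c_2,\dots]$ with $c_0=0$, $c_n=1$ for $n$ even $\ge2$ and for $n=1$, and $c_{2n+1}\in\{1,2\}$ for all $n\in\mathbb{N}$. Then for every $m\in\mathbb{N}$, $$\frac{2}{\pi}m\tan\left(\frac{\pi}{2}\left(m\gamma^{-1}-\lfloor m\gamma^{-1}\rfloor\right)\right)>\frac{1}{3}.$$
   Context: $[c_0;c_1,c_2,\dots]$ denotes the continued fraction $c_0+\cfrac{1}{c_1+\cfrac{1}{c_2+\cdots}}$. $\mathbb{N}=\{1,2,\dots\}$. *)

(* Defs.v *)
From Stdlib Require Import Reals.
Open Scope R_scope.

Fixpoint cf_fin (c : nat -> R) (n : nat) : R :=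
  match n with
  | O => c O
  | S k => c O + / cf_fin (fun i => c (S i)) k
  end.

Definition cf_value (c : nat -> nat) (x : R) : Prop :=
  Un_cv (fun n => cf_fin (fun i => INR (c i)) n) x.

(* Main.v *)
Require Import Defs.
From Stdlib Require Import Reals Lra Lia Psatz ZArith.
From Coquelicot Require Import Coquelicot.
Open Scope R_scope.

Lemma cf_fin_ext f g n : (forall i, f i = g i) -> cf_fin f n = cf_fin g n.
Proof.
  revert f g; induction n as [|n IH]; intros f g H; simpl.
  - apply H.
  - rewrite H, (IH _ (fun i => g (S i))); [reflexivity|]. intro; apply H.
Qed.

Definition Cs (c : nat -> nat) j n := cf_fin (fun i => INR (c (j + i)%nat)) n.

Lemma Cs_S c j n : Cs c j (S n) = INR (c j) + / Cs c (S j) n.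
Proof.
  unfold Cs; simpl. rewrite Nat.add_0_r. f_equal. f_equal.
  apply cf_fin_ext. intro i. f_equal. f_equal. lia.
Qed.

Lemma Cs_bounds c : (forall i, (1 <= i)%nat -> (1 <= c i)%nat) ->
  forall n j, (1 <= j)%nat -> 1 <= Cs c j n <= INR (c j) + 1.
Proof.
  intros Hc n. induction n as [|n IH]; intros j Hj.
  - unfold Cs; simpl. rewrite Nat.add_0_r. assert (H := le_INR _ _ (Hc j Hj)). simpl in H. lra.
  - rewrite Cs_S. assert (H := IH (S j) ltac:(lia)).
    assert (H2 := le_INR _ _ (Hc j Hj)). simpl in H2.
    assert (0 < / Cs c (S j) n <= 1).
    { split. apply Rinv_0_lt_compat; lra. rewrite <- Rinv_1. apply Rinv_le_contravar; lra. }
    lra.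
Qed.

Lemma tail_lim (a b : nat -> R) (c0 L K : R) : is_lim_seq a L ->
  (forall n, a (S n) = c0 + / b n) -> (forall n, 1 <= b n <= K) ->
  / K <= L - c0 /\ L - c0 <= 1 /\ is_lim_seq b (/ (L - c0)).
Proof.
  intros Ha Hab Hb.
  assert (HK : 1 <= K) by (specialize (Hb O); lra).
  assert (Hl : is_lim_seq (fun n => / b n) (L - c0)).
  { apply is_lim_seq_incr_1 in Ha.
    apply (is_lim_seq_ext (fun n => a (S n) - c0)).
    { intro n; rewrite Hab; ring. }
    apply is_lim_seq_minus'; [exact Ha| apply is_lim_seq_const]. }
  assert (H1 : /K <= L - c0).
  { assert (H := is_lim_seq_le (fun _ => / K) (fun n => / b n) (/K) (L - c0)).
    simpl in H. apply H; [|apply is_lim_seq_const|exact Hl].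
    intro n. apply Rinv_le_contravar; [apply (Rlt_le_trans _ 1); [lra|apply Hb]|apply Hb]. }
  assert (H2 : L - c0 <= 1).
  { assert (H := is_lim_seq_le (fun n => / b n) (fun _ => 1) (L - c0) 1).
    simpl in H. apply H; [|exact Hl|apply is_lim_seq_const].
    intro n. rewrite <- Rinv_1. apply Rinv_le_contravar; [lra|apply Hb]. }
  assert (HKp : 0 < / K) by (apply Rinv_0_lt_compat; lra).
  split; [exact H1|split; [exact H2|]].
  assert (H := is_lim_seq_inv _ _ Hl).
  simpl in H. apply (is_lim_seq_ext (fun n => / / b n)).
  { intro n. apply Rinv_inv. }
  apply H. intro E. injection E. lra.
Qed.

Fixpoint T (c : nat -> nat) (g : R) (j : nat) : R :=
  match j with O => g | S k => / (T c g k - INR (c k)) end.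

Lemma T_lim c g : (forall i, (1 <= i)%nat -> (1 <= c i)%nat) -> cf_value c g ->
  forall j, is_lim_seq (Cs c j) (T c g j)
    /\ 0 < T c g j - INR (c j) <= 1.
Proof.
  intros Hc Hg.
  assert (Hlim : forall j, is_lim_seq (Cs c j) (T c g j)).
  { induction j as [|j IH].
    - simpl. apply is_lim_seq_Reals in Hg. apply (is_lim_seq_ext _ _ _ (fun n => eq_refl) ) in Hg.
      apply (is_lim_seq_ext (fun n => cf_fin (fun i => INR (c i)) n)); [|exact Hg].
      intro n. unfold Cs. apply cf_fin_ext. intro; reflexivity.
    - destruct (tail_lim (Cs c j) (Cs c (S j)) (INR (c j)) (T c g j) (INR (c (S j)) + 1) IH
        (Cs_S c j) (fun n => Cs_bounds c Hc n (S j) ltac:(lia))) as [_ [_ H]].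
      exact H. }
  intro j. split; [apply Hlim|].
  destruct (tail_lim (Cs c j) (Cs c (S j)) (INR (c j)) (T c g j) (INR (c (S j)) + 1) (Hlim j)
        (Cs_S c j) (fun n => Cs_bounds c Hc n (S j) ltac:(lia))) as [H1 [H2 _]].
  split; [|exact H2]. eapply Rlt_le_trans; [|exact H1].
  apply Rinv_0_lt_compat. assert (H := pos_INR (c (S j))). lra.
Qed.
Lemma descent : forall N m : nat, (m <= N)%nat -> (1 <= m)%nat ->
  forall (y u : nat -> R) (z : nat -> Z),
  (forall k, u k >= 3/2) -> (forall k, y k = (2 * u k + 1) / (u k + 1)) ->
  (forall k, u k - y (S k) = IZR (z k)) ->
  forall p : Z, 0 <= INR m * y O - IZR p ->
  INR m * (INR m * y O - IZR p) >= 1/3 + 4/9 * (INR m * y O - IZR p).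
Proof.
  induction N as [|N IH]; intros m HmN Hm1 y u z Hu Hy Hz p Hd.
  { lia. }
  assert (Hu0 := Hu O). assert (Hy0 := Hy O).
  assert (Hr : y O - 1 >= 3/5).
  { rewrite Hy0. apply Rle_ge. apply (Rmult_le_reg_r (u O + 1)); [lra|].
    field_simplify; [lra|lra]. }
  assert (Hy2 : y O < 2).
  { rewrite Hy0. apply (Rmult_lt_reg_r (u O + 1)); [lra|]. field_simplify; lra. }
  assert (HM : 1 <= INR m) by (apply (le_INR 1); lia).
  set (d := INR m * y O - IZR p) in *.
  destruct (Z_le_gt_dec p (Z.of_nat m)) as [Hp|Hp].
  - apply IZR_le in Hp. rewrite <- INR_IZR_INZ in Hp.
    assert (d >= 3/5) by (unfold d; nra). nra.
  - assert (Hp2 : (p < 2 * Z.of_nat m)%Z).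
    { apply lt_IZR. rewrite mult_IZR, <- INR_IZR_INZ. unfold d in Hd. simpl. nra. }
    set (m' := Z.to_nat (2 * Z.of_nat m - p)).
    assert (Hm' : INR m' = 2 * INR m - IZR p).
    { unfold m'. rewrite INR_IZR_INZ, Z2Nat.id by lia.
      rewrite minus_IZR, mult_IZR, <- INR_IZR_INZ. reflexivity. }
    set (p'' := (p - Z.of_nat m - z O * Z.of_nat m')%Z).
    assert (Hd' : INR m' * y 1%nat - IZR p'' = (u O + 1) * d).
    { unfold p''. rewrite !minus_IZR, mult_IZR, <- !INR_IZR_INZ.
      assert (Hz0 := Hz O). assert (Hy1 : y 1%nat = u O - IZR (z O)) by lra.
      unfold d. rewrite Hm', Hy1, Hy0. field. lra. }
    assert (HIH := IH m' ltac:(unfold m'; lia) ltac:(unfold m'; lia)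
      (fun k => y (S k)) (fun k => u (S k)) (fun k => z (S k))
      (fun k => Hu (S k)) (fun k => Hy (S k)) (fun k => Hz (S k)) p''
      ltac:(cbv beta; rewrite Hd'; nra)).
    cbv beta in HIH. rewrite Hd' in HIH.
    assert (Hm2 : (2 <= m)%nat) by lia.
    assert (Hpr : IZR p > INR m) by (rewrite INR_IZR_INZ; apply IZR_lt; lia).
    destruct (Rle_dec d (4/15)) as [Hs|Hs].
    +
      assert (Hq : INR m - INR m' = INR m' * u O - (u O + 1) * d).
      { rewrite Hm'. unfold d. rewrite Hy0. field. lra. }
      assert (Hmd : INR m * d = INR m' * ((u O + 1) * d) - (u O + 1) * d * d).
      { assert (INR m = INR m' * (u O + 1) - (u O + 1) * d) by lra.
        rewrite H. ring. }
      rewrite Hmd.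
      assert (4/9 * u O - (u O + 1) * d >= 0) by nra.
      nra.
    + assert (2 <= INR m).
      { apply (le_INR 2) in Hm2. simpl in Hm2. lra. }
      nra.
Qed.
Lemma tan_ge_id x : 0 <= x < PI / 2 -> x <= tan x.
Proof.
  intros [H0 H1]. destruct (Req_dec x 0) as [->|Hx].
  { rewrite tan_0; lra. }
  assert (HPI := PI_RGT_0).
  destruct (MVT_cor2 tan (fun c => 1 + tan c ^ 2) 0 x) as [c [Hc1 Hc2]]; [lra| |].
  { intros c Hc. assert (Pr : - PI / 2 < c < PI / 2) by lra.
    apply (derive_pt_eq_1 _ _ _ (derivable_pt_tan c Pr)). apply derive_pt_tan. }
  rewrite tan_0 in Hc1. assert (0 <= tan c ^ 2) by (apply pow2_ge_0). nra.
Qed.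

Theorem lemma5p4 (c : nat -> nat)
  (h0 : c O = O) (h1 : c 1%nat = 1%nat)
  (heven : forall n : nat, (1 <= n)%nat -> c (2 * n)%nat = 1%nat)
  (hodd : forall n : nat, (1 <= n)%nat ->
            c (2 * n + 1)%nat = 1%nat \/ c (2 * n + 1)%nat = 2%nat)
  (gamma : R) (hgamma : cf_value c gamma) :
  forall m : nat, (1 <= m)%nat ->
    2 / PI * INR m * tan (PI / 2 * (INR m / gamma - IZR (Int_part (INR m / gamma))))
      > 1 / 3.
Proof.
  intros m Hm.
  assert (Hc : forall i, (1 <= i)%nat -> (1 <= c i)%nat).
  { intros i Hi. destruct (Nat.Even_or_Odd i) as [[n ->]|[n ->]].
    - rewrite heven by lia. lia.
    - destruct n as [|n]. { simpl. rewrite h1. lia. }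
      destruct (hodd (S n) ltac:(lia)) as [H|H]; rewrite H; lia. }
  assert (HT := T_lim c gamma Hc hgamma).
  set (t := T c gamma) in *.
  assert (Hrec : forall j, t (S j) = / (t j - INR (c j))) by reflexivity.
  assert (HF : forall j, t j = INR (c j) + / t (S j) /\ 1 <= t (S j)).
  { intro j. destruct (HT j) as [_ [H1 H2]]. rewrite Hrec. rewrite Rinv_inv. split; [ring|].
    rewrite <- Rinv_1. apply Rinv_le_contravar; lra. }
  assert (Hce : forall k, c (2 * k + 2)%nat = 1%nat).
  { intro k. replace (2 * k + 2)%nat with (2 * (S k))%nat by lia. apply heven; lia. }
  assert (Hge1 : forall j, 1 <= INR (c (S j))).
  { intro j. apply (le_INR 1). apply Hc. lia. }
  set (y := fun k => 1 + / t (2 * k + 2)%nat).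
  set (u := fun k => t (2 * k + 3)%nat).
  set (z := fun k => (Z.of_nat (c (2 * k + 3)%nat) - 1)%Z).
  assert (Hu : forall k, u k >= 3/2).
  { intro k. unfold u. destruct (HF (2 * k + 3)%nat) as [E1 _].
    assert (Hj := Hce (k + 1)%nat).
    replace (S (2 * k + 3)) with (2 * (k + 1) + 2)%nat in E1 by lia.
    set (j := (2 * (k + 1) + 2)%nat) in *.
    destruct (HF j) as [E2 G2].
    rewrite Hj in E2. change (INR 1) with 1 in E2.
    destruct (HF (S j)) as [_ G3].
    assert (0 < / t (S j) <= 1).
    { split. apply Rinv_0_lt_compat; lra. rewrite <- Rinv_1. apply Rinv_le_contravar; lra. }
    assert (/ t j >= / 2).
    { apply Rle_ge, Rinv_le_contravar; [lra|]. lra. }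
    assert (Hg1 := Hge1 (2 * k + 2)%nat). replace (S (2 * k + 2)) with (2 * k + 3)%nat in Hg1 by lia.
    lra. }
  assert (Hy : forall k, y k = (2 * u k + 1) / (u k + 1)).
  { intro k. unfold y, u. destruct (HF (2 * k + 2)%nat) as [E G].
    rewrite Hce in E. change (INR 1) with 1 in E. replace (S (2 * k + 2)) with (2 * k + 3)%nat in E, G by lia.
    rewrite E. field. lra. }
  assert (Hz : forall k, u k - y (S k) = IZR (z k)).
  { intro k. unfold u, y, z. destruct (HF (2 * k + 3)%nat) as [E _].
    replace (S (2 * k + 3)) with (2 * S k + 2)%nat in E by lia.
    rewrite minus_IZR, <- INR_IZR_INZ. rewrite E. simpl IZR. ring. }
  assert (Hg : INR m / gamma = INR m * y O).
  { unfold y. simpl (2 * 0 + 2)%nat. destruct (HF 1%nat) as [E _]. rewrite h1 in E. simpl in E.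
    rewrite <- E. unfold Rdiv. f_equal. unfold t; simpl. rewrite h0. simpl. f_equal. ring. }
  rewrite Hg.
  destruct (base_Int_part (INR m * y O)) as [B1 B2].
  set (p := Int_part (INR m * y O)) in *.
  set (d := INR m * y O - IZR p) in *.
  assert (HD := descent m m (le_n _) Hm y u z Hu Hy Hz p ltac:(unfold d; lra)).
  fold d in HD.
  assert (HM : 1 <= INR m) by (apply (le_INR 1); lia).
  assert (Hd0 : 0 < d).
  { destruct (Req_dec d 0) as [E|E]; [|unfold d in *; lra].
    rewrite E in HD. lra. }
  assert (HPI := PI_RGT_0).
  assert (Htan := tan_ge_id (PI / 2 * d) ltac:(split; [nra|unfold d in *; nra])).
  assert (2 / PI * INR m * tan (PI / 2 * d) >= 2 / PI * INR m * (PI / 2 * d)).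
  { apply Rle_ge, Rmult_le_compat_l; [|exact Htan].
    apply Rmult_le_pos; [|lra]. apply Rlt_le, Rdiv_lt_0_compat; lra. }
  replace (2 / PI * INR m * (PI / 2 * d)) with (INR m * d) in H by (field; lra).
  lra.
Qed.
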